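(* The reduction relation $\to_{\tt j}$ on $\lambda j$-terms is confluent and terminating. Consequently every term $t$ has a unique ${\tt j}$-normal form ${\tt j}(t)$, and: ${\tt j}(x)=x$, ${\tt j}(\lambda x.u)=\lambda x.{\tt j}(u)$, ${\tt j}(u\,v)={\tt j}(u)\,{\tt j}(v)$, and ${\tt j}(u[x/v])={\tt j}(u)\{x/{\tt j}(v)\}$.
   Context: $\lambda j$-terms are generated by $t,u::= x\mid \lambda x.t\mid t\,u\mid t[x/u]$ ($x$ ranging over variables); $\lambda x.t$ and $t[x/u]$ bind $x$ in $t$ (not in $u$), and terms are considered modulo $\alpha$-conversion. $\mathrm{fv}(t)$ is the set of free variables, $t\{x/u\}$ is capture-avoiding meta-level substitution, and $|t|_x$ is the number of free occurrences of $x$ in $t$. If $|t|_x=n\ge2$, $t_{[y]_x}$ denotes any term obtained from $t$ by replacing $k$ of the free occurrences of $x$ by a fresh variable $y$, for some $1\le k\le n-1$. The relation $\to_{\tt j}$ is the closure under all contexts of the rules: $({\tt w})$ $t[x/u]\to t$ if $|t|_x=0$; $({\tt d})$ $t[x/u]\to t\{x/u\}$ if $|t|_x=1$; $({\tt c})$ $t[x/u]\to t_{[y]_x}[x/u][y/u]$ if $|t|_x\ge2$, $y$ fresh. *)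

(* Defs.v *)
(* lambda-j terms modulo alpha-conversion, represented with
   de Bruijn indices (alpha-equivalent terms are syntactically equal). *)
From Stdlib Require Import Arith Relations.

(* Var n : variable with de Bruijn index n
   Lam t : \x.t  (binds index 0 in t)
   App t u : t u
   ES t u : t[x/u]  (binds index 0 in t, not in u) *)
Inductive term : Type :=
| Var : nat -> term
| Lam : term -> term
| App : term -> term -> term
| ES  : term -> term -> term.

Fixpoint lift (c : nat) (t : term) : term :=
  match t with
  | Var n => if n <? c then Var n else Var (S n)
  | Lam t1 => Lam (lift (S c) t1)
  | App t1 t2 => App (lift c t1) (lift c t2)
  | ES t1 t2 => ES (lift (S c) t1) (lift c t2)
  end.

(* subst k u t : capture-avoiding meta-substitution t{k/u}: index k is
   replaced by u (which lives in the context with k's binder removed),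
   indices > k are decremented (the binder of k disappears). *)
Fixpoint subst (k : nat) (u : term) (t : term) : term :=
  match t with
  | Var n => if n <? k then Var n else if n =? k then u else Var (pred n)
  | Lam t1 => Lam (subst (S k) (lift 0 u) t1)
  | App t1 t2 => App (subst k u t1) (subst k u t2)
  | ES t1 t2 => ES (subst (S k) (lift 0 u) t1) (subst k u t2)
  end.

Fixpoint occ (k : nat) (t : term) : nat :=
  match t with
  | Var n => if n =? k then 1 else 0
  | Lam t1 => occ (S k) t1
  | App t1 t2 => occ k t1 + occ k t2
  | ES t1 t2 => occ (S k) t1 + occ k t2
  end.

(* split d t t' : t' is obtained from t by inserting a fresh variable y
   (index d+1 in t', the old index d = x stays d) and replacing SOME of the
   free occurrences of x by y. *)
Inductive split : nat -> term -> term -> Prop :=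
| sp_lt : forall d n, n < d -> split d (Var n) (Var n)
| sp_x  : forall d, split d (Var d) (Var d)
| sp_y  : forall d, split d (Var d) (Var (S d))
| sp_gt : forall d n, d < n -> split d (Var n) (Var (S n))
| sp_lam : forall d t t', split (S d) t t' -> split d (Lam t) (Lam t')
| sp_app : forall d t t' u u', split d t t' -> split d u u' ->
    split d (App t u) (App t' u')
| sp_es : forall d t t' u u', split (S d) t t' -> split d u u' ->
    split d (ES t u) (ES t' u').

(* For t[x/u] = ES t u, x is index 0 of t.
   (w): t[x/u] -> t  (when |t|_x = 0; in de Bruijn the binder is removed,
        which is subst 0 u t since x does not occur).
   (d): t[x/u] -> t{x/u}  (when |t|_x = 1).
   (c): t[x/u] -> t_[y]_x [x/u][y/u] (when |t|_x >= 2), where t' = t_[y]_x has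
        x at index 0, y at index 1, and k occurrences of x renamed with
        1 <= k <= n-1, i.e. both x and y occur in t'. *)
Inductive jhead : term -> term -> Prop :=
| r_w : forall t u, occ 0 t = 0 -> jhead (ES t u) (subst 0 u t)
| r_d : forall t u, occ 0 t = 1 -> jhead (ES t u) (subst 0 u t)
| r_c : forall t t' u, 2 <= occ 0 t -> split 0 t t' ->
    1 <= occ 0 t' -> 1 <= occ 1 t' ->
    jhead (ES t u) (ES (ES t' (lift 0 u)) u).

Inductive jstep : term -> term -> Prop :=
| js_head : forall t t', jhead t t' -> jstep t t'
| js_lam : forall t t', jstep t t' -> jstep (Lam t) (Lam t')
| js_appl : forall t t' u, jstep t t' -> jstep (App t u) (App t' u)
| js_appr : forall t u u', jstep u u' -> jstep (App t u) (App t u')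
| js_esl : forall t t' u, jstep t t' -> jstep (ES t u) (ES t' u)
| js_esr : forall t u u', jstep u u' -> jstep (ES t u) (ES t u').

Definition jstar : term -> term -> Prop := clos_refl_trans term jstep.

Definition confluent_j : Prop :=
  forall t a b, jstar t a -> jstar t b -> exists c, jstar a c /\ jstar b c.

Definition SN_j (t : term) : Prop := Acc (fun a b => jstep b a) t.

Definition jnormal (t : term) : Prop := forall t', ~ jstep t t'.

Definition jnf (t n : term) : Prop := jstar t n /\ jnormal n.

(* Main.v *)
Require Import Defs.
From Stdlib Require Import Arith Relations.
From Stdlib Require Import Lia.

Arguments Nat.eqb : simpl never. Arguments Nat.ltb : simpl never.
Ltac dec := repeat (simpl; match goal with
  | |- context [?a <? ?b] => destruct (Nat.ltb_spec a b)
  | |- context [?a =? ?b] => destruct (Nat.eqb_spec a b)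
  end); simpl; try lia; try reflexivity; try (f_equal; lia).

Lemma lift_lift : forall u i c, i <= c -> lift (S c) (lift i u) = lift i (lift c u).
Proof.
  induction u; intros i c H; simpl.
  - dec.
  - rewrite IHu by lia; reflexivity.
  - rewrite IHu1, IHu2 by lia; reflexivity.
  - rewrite IHu1, IHu2 by lia; reflexivity.
Qed.

Lemma subst_lift : forall t k u, subst k u (lift k t) = t.
Proof.
  induction t; intros k u; simpl.
  - dec.
  - rewrite IHt; reflexivity.
  - rewrite IHt1, IHt2; reflexivity.
  - rewrite IHt1, IHt2; reflexivity.
Qed.

Lemma lift_subst_ge : forall t k c u, k <= c ->
  lift c (subst k u t) = subst k (lift c u) (lift (S c) t).
Proof.
  induction t; intros k c u H; simpl.
  - dec.
  - rewrite IHt by lia. rewrite lift_lift by lia. reflexivity.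
  - rewrite IHt1, IHt2 by lia; reflexivity.
  - rewrite IHt1, IHt2 by lia. rewrite lift_lift by lia. reflexivity.
Qed.

Lemma lift_subst_le : forall t k c u, c <= k ->
  lift c (subst k u t) = subst (S k) (lift c u) (lift c t).
Proof.
  induction t; intros k c u H; simpl.
  - dec.
  - rewrite IHt by lia. rewrite lift_lift by lia. reflexivity.
  - rewrite IHt1, IHt2 by lia; reflexivity.
  - rewrite IHt1, IHt2 by lia. rewrite lift_lift by lia. reflexivity.
Qed.

Lemma subst_subst : forall t j k u v, j <= k ->
  subst k u (subst j v t) = subst j (subst k u v) (subst (S k) (lift j u) t).
Proof.
  induction t; intros j k u v H; simpl.
  - dec; subst; try (rewrite subst_lift; reflexivity).
    all: try (replace n with (S k) in * by lia; dec; rewrite subst_lift; reflexivity).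
  - rewrite IHt by lia. rewrite lift_lift by lia.
    rewrite <- lift_subst_le by lia. reflexivity.
  - rewrite IHt1, IHt2 by lia; reflexivity.
  - rewrite IHt1, IHt2 by lia. rewrite lift_lift by lia.
    rewrite <- lift_subst_le by lia. reflexivity.
Qed.

Fixpoint Pg (f : nat -> nat) (x : nat) (t : term) : nat :=
  match t with
  | Var n => if n =? x then 1 else 0
  | Lam a => Pg f (S x) a
  | App a b => Pg f x a + Pg f x b
  | ES a b => Pg f (S x) a + f (Pg f 0 a) * Pg f x b
  end.

Lemma Pg_lift : forall f u c y,
  Pg f y (lift c u) = if y <? c then Pg f y u else if y =? c then 0 else Pg f (pred y) u.
Proof.
  induction u; intros c y; simpl.
  - dec.
  - rewrite IHu. dec; try (replace (S (pred y)) with y by lia; reflexivity).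
  - rewrite IHu1, IHu2. dec.
  - rewrite IHu1, IHu2, IHu1. dec; try (replace (S (pred y)) with y by lia; reflexivity).
Qed.

Lemma Pg_lift0 : forall f u, Pg f 0 (lift 0 u) = 0.
Proof. intros. rewrite Pg_lift. reflexivity. Qed.

Lemma Pg_liftS : forall f u y, Pg f (S y) (lift 0 u) = Pg f y u.
Proof. intros. rewrite Pg_lift. reflexivity. Qed.

Lemma Pg_subst : forall f t k u y,
  Pg f y (subst k u t) = Pg f (if y <? k then y else S y) t + Pg f k t * Pg f y u.
Proof.
  induction t; intros k u y; simpl.
  - dec; subst; dec.
  - rewrite IHt, Pg_liftS. dec.
  - rewrite IHt1, IHt2. Nat.nzsimpl. ring.
  - rewrite IHt1, IHt2, IHt1, Pg_liftS, Pg_lift0.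
    replace (if 0 <? S k then 0 else 1) with 0 by dec.
    replace (if S y <? S k then S y else S (S y)) with (S (if y <? k then y else S y)) by dec.
    rewrite Nat.mul_0_r, Nat.add_0_r. ring.
Qed.

Lemma occ_Pg : forall t k, occ k t = Pg (fun _ => 1) k t.
Proof.
  induction t; intros k; simpl; try rewrite IHt; try rewrite IHt1, IHt2; try lia.
Qed.

Lemma Pg_zero : forall f, (forall n, 1 <= f n) -> forall t k, occ k t = 0 <-> Pg f k t = 0.
Proof.
  intros f Hf; induction t; intros k; simpl.
  - tauto.
  - apply IHt.
  - specialize (IHt1 k); specialize (IHt2 k). lia.
  - specialize (IHt1 (S k)); specialize (IHt2 k).
    specialize (Hf (Pg f 0 t1)). split; intro H.
    + assert (Pg f (S k) t1 = 0) by (apply IHt1; lia).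
      assert (Pg f k t2 = 0) by (apply IHt2; lia). nia.
    + assert (Pg f (S k) t1 = 0) by lia.
      assert (Pg f k t2 = 0) by nia. apply IHt1 in H0. apply IHt2 in H1. lia.
Qed.

Definition P3 := Pg (fun n => 3 ^ n).

Fixpoint msz (t : term) : nat :=
  match t with
  | Var _ => 1
  | Lam a => msz a
  | App a b => msz a + msz b
  | ES a b => msz a + 3 ^ (P3 0 a) * msz b
  end.

Lemma msz_pos : forall t, 1 <= msz t.
Proof.
  induction t; simpl; try lia.
  all: assert (1 <= 3 ^ P3 0 t1) by (apply Nat.neq_0_lt_0, Nat.pow_nonzero; lia); nia.
Qed.

Lemma msz_lift : forall t c, msz (lift c t) = msz t.
  induction t; intros c; simpl; try rewrite IHt; try rewrite IHt1, IHt2; try reflexivity.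
  - destruct (n <? c); reflexivity.
  - unfold P3; rewrite Pg_lift; reflexivity.


Qed.

Lemma P3_subst0 : forall t k u, P3 0 (subst (S k) (lift 0 u) t) = P3 0 t.
Proof. intros. unfold P3. rewrite Pg_subst, Pg_lift0. simpl. lia. Qed.

Lemma msz_subst : forall t k u, msz (subst k u t) + P3 k t = msz t + P3 k t * msz u.
Proof.
  induction t; intros k u; simpl.
  - unfold P3; simpl; dec; subst; dec; rewrite Nat.eqb_refl; lia.
  - rewrite IHt. unfold P3; simpl. rewrite msz_lift. reflexivity.
  - specialize (IHt1 k u); specialize (IHt2 k u). unfold P3 in *; simpl. nia.
  - rewrite P3_subst0. specialize (IHt1 (S k) (lift 0 u)); specialize (IHt2 k u).
    rewrite msz_lift in IHt1. unfold P3 in *; simpl.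
    set (F := 3 ^ Pg (fun n : nat => 3 ^ n) 0 t1) in *. nia.
Qed.

Lemma split_merge : forall d s s', split d s s' -> subst d (Var d) s' = s.
Proof.
  induction 1; simpl; dec; try congruence.
Qed.

Lemma split_merge0 : forall s s' v, split 0 s s' ->
  subst 0 v (subst 0 (lift 0 v) s') = subst 0 v s.
Proof.
  intros s s' v H. rewrite <- (split_merge _ _ _ H).
  rewrite subst_subst by lia. rewrite (subst_subst s' 0 0 v (Var 0)) by lia.
  rewrite subst_lift. simpl. reflexivity.
Qed.

Lemma split_id : forall t d, exists t', split d t t' /\ occ d t' = occ d t /\ occ (S d) t' = 0.
Proof.
  induction t; intros d.
  - destruct (lt_eq_lt_dec n d) as [[H|H]|H].
    + exists (Var n). split; [apply sp_lt; auto|]; split; simpl; dec.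
    + subst. exists (Var d). split; [apply sp_x|]; split; simpl; dec.
    + exists (Var (S n)). split; [apply sp_gt; auto|]; split; simpl; dec.
  - destruct (IHt (S d)) as [t' [H1 [H2 H3]]]. exists (Lam t'). split. constructor; auto.
    simpl. auto.
  - destruct (IHt1 d) as [a [H1 [H2 H3]]]. destruct (IHt2 d) as [b [H4 [H5 H6]]].
    exists (App a b). split. constructor; auto. simpl. lia.
  - destruct (IHt1 (S d)) as [a [H1 [H2 H3]]]. destruct (IHt2 d) as [b [H4 [H5 H6]]].
    exists (ES a b). split. constructor; auto. simpl. lia.
Qed.

Lemma split_one : forall t d, 1 <= occ d t ->
  exists t', split d t t' /\ occ d t' = occ d t - 1 /\ occ (S d) t' = 1.
Proof.
  induction t; intros d Hd.
  - simpl in Hd. destruct (Nat.eqb_spec n d); [|lia]. subst.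
    exists (Var (S d)). split; [apply sp_y|]; split; simpl; dec.
  - destruct (IHt (S d)) as [t' [H1 [H2 H3]]]; auto. exists (Lam t'). split. constructor; auto.
    simpl. auto.
  - simpl in Hd. destruct (le_lt_dec 1 (occ d t1)).
    + destruct (IHt1 d) as [a [H1 [H2 H3]]]; auto. destruct (split_id t2 d) as [b [H4 [H5 H6]]].
      exists (App a b). split. constructor; auto. simpl. lia.
    + destruct (split_id t1 d) as [a [H1 [H2 H3]]]. destruct (IHt2 d) as [b [H4 [H5 H6]]]. lia.
      exists (App a b). split. constructor; auto. simpl. lia.
  - simpl in Hd. destruct (le_lt_dec 1 (occ (S d) t1)).
    + destruct (IHt1 (S d)) as [a [H1 [H2 H3]]]; auto. destruct (split_id t2 d) as [b [H4 [H5 H6]]].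
      exists (ES a b). split. constructor; auto. simpl. lia.
    + destruct (split_id t1 (S d)) as [a [H1 [H2 H3]]]. destruct (IHt2 d) as [b [H4 [H5 H6]]]. lia.
      exists (ES a b). split. constructor; auto. simpl. lia.
Qed.

Lemma P3_pos : forall t k, 1 <= occ k t -> 1 <= P3 k t.
Proof.
  intros t k H. destruct (Nat.eq_dec (P3 k t) 0); [|lia].
  apply (Pg_zero (fun n => 3 ^ n)) in e; [lia|].
  intros; apply Nat.neq_0_lt_0, Nat.pow_nonzero; lia.
Qed.

Lemma P3_zero : forall t k, occ k t = 0 -> P3 k t = 0.
Proof.
  intros t k H. apply (Pg_zero (fun n => 3 ^ n)); auto.
  intros; apply Nat.neq_0_lt_0, Nat.pow_nonzero; lia.
Qed.

Lemma P3_ES : forall x a b, P3 x (ES a b) = P3 (S x) a + 3 ^ (P3 0 a) * P3 x b.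
Proof. reflexivity. Qed.

Lemma pow3_gt : forall n, n < 3 ^ n.
Proof. intros. apply Nat.pow_gt_lin_r. lia. Qed.

Lemma step_dec : forall t t', jstep t t' ->
  msz t' < msz t /\ forall x, P3 x t' <= P3 x t.
Proof.
  induction 1.
  - destruct H.
    + pose proof (msz_subst t 0 u). pose proof (pow3_gt (P3 0 t)). pose proof (msz_pos u).
      split; simpl.
      * set (E := 3 ^ P3 0 t) in *. nia.
      * intro x. unfold P3 in *. rewrite Pg_subst. simpl.
        apply Nat.add_le_mono_l, Nat.mul_le_mono_r. lia.
    + pose proof (msz_subst t 0 u). pose proof (pow3_gt (P3 0 t)). pose proof (msz_pos u).
      split; simpl.
      * set (E := 3 ^ P3 0 t) in *. nia.
      * intro x. unfold P3 in *. rewrite Pg_subst. simpl.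
        apply Nat.add_le_mono_l, Nat.mul_le_mono_r. lia.
    + rename H0 into Hs. apply split_merge in Hs. subst t.
      pose proof (P3_pos _ _ H1) as Ha. pose proof (P3_pos _ _ H2) as Hb.
      pose proof (msz_subst t' 0 (Var 0)) as Hm. simpl in Hm.
      assert (Hp : forall y, P3 y (subst 0 (Var 0) t') =
                P3 (S y) t' + P3 0 t' * (if 0 =? y then 1 else 0)).
      { intro y. unfold P3 at 1. rewrite Pg_subst. reflexivity. }
      pose proof (Hp 0) as Hp0. rewrite Nat.eqb_refl, Nat.mul_1_r in Hp0. rewrite Nat.mul_1_r in Hm.
      assert (E1 : P3 0 (ES t' (lift 0 u)) = P3 1 t').
      { rewrite P3_ES. unfold P3. rewrite Pg_lift0, Nat.mul_0_r. lia. }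
      assert (3 ^ P3 1 t' + 3 ^ P3 0 t' < 3 ^ (P3 1 t' + P3 0 t')).
      { rewrite Nat.pow_add_r.
        assert (3 ^ 1 <= 3 ^ P3 1 t') by (apply Nat.pow_le_mono_r; lia).
        assert (3 ^ 1 <= 3 ^ P3 0 t') by (apply Nat.pow_le_mono_r; lia).
        simpl in *. nia. }
      pose proof (msz_pos u). split.
      * change (msz (ES t' (lift 0 u)) + 3 ^ P3 0 (ES t' (lift 0 u)) * msz u <
                msz (subst 0 (Var 0) t') + 3 ^ P3 0 (subst 0 (Var 0) t') * msz u).
        rewrite E1, Hp0. simpl. rewrite msz_lift. nia.
      * intro x. rewrite (P3_ES x (ES _ _)), (P3_ES x (subst _ _ _)), E1, Hp0, Hp, P3_ES.
        assert (LS : P3 (S x) (lift 0 u) = P3 x u) by (unfold P3; apply Pg_liftS).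
        rewrite LS. replace (0 =? S x) with false by reflexivity. assert (3 ^ P3 0 t' * P3 x u + 3 ^ P3 1 t' * P3 x u <= 3 ^ (P3 1 t' + P3 0 t') * P3 x u) by (rewrite <- Nat.mul_add_distr_r; apply Nat.mul_le_mono_r; lia). lia.
  - destruct IHjstep as [H1 H2]. split; simpl; auto. intro x; apply (H2 (S x)).
  - destruct IHjstep as [H1 H2]. split; simpl; [lia|]. intro x; specialize (H2 x); unfold P3 in *; simpl; lia.
  - destruct IHjstep as [H1 H2]. split; simpl; [lia|]. intro x; specialize (H2 x); unfold P3 in *; simpl; lia.
  - destruct IHjstep as [H1 H2]. pose proof (H2 0).
    assert (3 ^ P3 0 t' <= 3 ^ P3 0 t) by (apply Nat.pow_le_mono_r; lia).
    split; simpl.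
    + nia.
    + intro x. specialize (H2 (S x)). unfold P3 in *; simpl. nia.
  - destruct IHjstep as [H1 H2]. split; simpl.
    + assert (1 <= 3 ^ P3 0 t) by (apply Nat.neq_0_lt_0, Nat.pow_nonzero; lia). nia.
    + intro x. specialize (H2 x). unfold P3 in *; simpl. nia.
Qed.

Lemma SN_all : forall t, SN_j t.
Proof.
  intro t. remember (msz t) as n. revert t Heqn.
  induction n as [n IH] using lt_wf_ind. intros t Ht. constructor. intros y Hy.
  apply (IH (msz y)); [ destruct (step_dec _ _ Hy); lia | reflexivity].
Qed.

Fixpoint J (t : term) : term :=
  match t with
  | Var n => Var n
  | Lam a => Lam (J a)
  | App a b => App (J a) (J b)
  | ES a b => subst 0 (J b) (J a)
  end.

Lemma J_lift : forall t c, J (lift c t) = lift c (J t).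
Proof.
  induction t; intros c; simpl.
  - destruct (n <? c); reflexivity.
  - rewrite IHt; reflexivity.
  - rewrite IHt1, IHt2; reflexivity.
  - rewrite IHt1, IHt2. rewrite lift_subst_ge by lia. reflexivity.
Qed.

Lemma J_subst : forall t k u, J (subst k u t) = subst k (J u) (J t).
Proof.
  induction t; intros k u; simpl.
  - destruct (n <? k); [reflexivity|]. destruct (n =? k); reflexivity.
  - rewrite IHt, J_lift; reflexivity.
  - rewrite IHt1, IHt2; reflexivity.
  - rewrite IHt1, IHt2, J_lift. rewrite (subst_subst (J t1) 0 k) by lia. reflexivity.
Qed.

Lemma J_step : forall t t', jstep t t' -> J t = J t'.
Proof.
  induction 1; simpl; try congruence.
  destruct H; simpl; try (rewrite J_subst; reflexivity).
  apply split_merge in H0. subst t. rewrite J_subst, J_lift. simpl.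
  rewrite (subst_subst (J t') 0 0 (J u) (Var 0)) by lia.
  rewrite (subst_subst (J t') 0 0 (J u) (lift 0 (J u))) by lia.
  rewrite subst_lift. reflexivity.
Qed.

Lemma J_star : forall t t', jstar t t' -> J t = J t'.
Proof. induction 1; auto using J_step; congruence. Qed.

Fixpoint pure (t : term) : Prop :=
  match t with
  | Var _ => True
  | Lam a => pure a
  | App a b => pure a /\ pure b
  | ES _ _ => False
  end.

Lemma pure_lift : forall t c, pure t -> pure (lift c t).
Proof.
  induction t; intros c H; simpl in *; try tauto; try (destruct (n <? c); exact I); auto.
  destruct H; split; auto.
Qed.

Lemma pure_subst : forall t k u, pure u -> pure t -> pure (subst k u t).
Proof.
  induction t; intros k u Hu H; simpl in *; try tauto.
  - destruct (n <? k); [exact I|]. destruct (n =? k); [auto|exact I].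
  - apply IHt; auto using pure_lift.
  - destruct H; split; auto.
Qed.

Lemma J_pure : forall t, pure (J t).
Proof. induction t; simpl; auto using pure_subst. Qed.

Lemma J_pure_id : forall t, pure t -> J t = t.
Proof. induction t; simpl; intros; try tauto; f_equal; tauto. Qed.

Lemma pure_normal : forall t, pure t -> jnormal t.
Proof.
  intros t H t' Hs. induction Hs; simpl in *; try tauto.
  destruct H0; simpl in H; exact H.
Qed.

Lemma reducible : forall t, pure t \/ exists t', jstep t t'.
Proof.
  induction t; simpl.
  - left; exact I.
  - destruct IHt as [H|[t' H]]; [left; auto | right; eexists; apply js_lam, H].
  - destruct IHt1 as [H|[t' H]]; [|right; eexists; apply js_appl, H].
    destruct IHt2 as [H'|[t' H']]; [left; auto | right; eexists; apply js_appr, H'].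
  - right. destruct (occ 0 t1) as [|[|n]] eqn:E.
    + eexists; apply js_head, r_w, E.
    + eexists; apply js_head, r_d, E.
    + destruct (split_one t1 0) as [t' [H1 [H2 H3]]]; [lia|].
      eexists; apply js_head. apply (r_c t1 t' t2); lia || auto.
Qed.

Lemma normal_pure : forall t, jnormal t -> pure t.
Proof.
  intros t H. destruct (reducible t) as [P|[t' S]]; auto. exfalso; exact (H t' S).
Qed.

Lemma star_lam : forall t t', jstar t t' -> jstar (Lam t) (Lam t').
Proof. induction 1; [apply rt_step; apply js_lam; auto | apply rt_refl | eapply rt_trans; eauto]. Qed.
Lemma star_appl : forall t t' u, jstar t t' -> jstar (App t u) (App t' u).
Proof. induction 1; [apply rt_step; apply js_appl; auto | apply rt_refl | eapply rt_trans; eauto]. Qed.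
Lemma star_appr : forall t u u', jstar u u' -> jstar (App t u) (App t u').
Proof. induction 1; [apply rt_step; apply js_appr; auto | apply rt_refl | eapply rt_trans; eauto]. Qed.
Lemma star_esl : forall t t' u, jstar t t' -> jstar (ES t u) (ES t' u).
Proof. induction 1; [apply rt_step; apply js_esl; auto | apply rt_refl | eapply rt_trans; eauto]. Qed.
Lemma star_esr : forall t u u', jstar u u' -> jstar (ES t u) (ES t u').
Proof. induction 1; [apply rt_step; apply js_esr; auto | apply rt_refl | eapply rt_trans; eauto]. Qed.

Lemma occ_lift0 : forall u, occ 0 (lift 0 u) = 0.
Proof. intros. rewrite occ_Pg. apply Pg_lift0. Qed.

Lemma es_to_subst : forall n t v, occ 0 t = n -> jstar (ES t v) (subst 0 v t).
Proof.
  induction n as [n IH] using lt_wf_ind. intros t v Hn.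
  destruct n as [|[|n]].
  - apply rt_step, js_head, r_w; auto.
  - apply rt_step, js_head, r_d; auto.
  - destruct (split_one t 0) as [t' [H1 [H2 H3]]]; [lia|].
    eapply rt_trans. apply rt_step, js_head. apply (r_c t t' v); try lia; auto.
    eapply rt_trans. apply star_esl. apply (IH (occ 0 t')); [lia|reflexivity].
    rewrite <- (split_merge0 t t' v H1).
    apply rt_step, js_head, r_d.
    rewrite occ_Pg, Pg_subst. simpl. rewrite <- !occ_Pg, occ_lift0. lia.
Qed.

Lemma to_J : forall t, jstar t (J t).
Proof.
  induction t; simpl.
  - apply rt_refl.
  - apply star_lam; auto.
  - eapply rt_trans; [apply star_appl; eauto | apply star_appr; eauto].
  - eapply rt_trans; [apply star_esl; eauto|].
    eapply rt_trans; [apply star_esr; eauto|].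
    apply (es_to_subst _ _ _ eq_refl).
Qed.

Theorem lemma9 :
  confluent_j /\
  (forall t, SN_j t) /\
  (forall t, exists! n, jnf t n) /\
  (forall x, jnf (Var x) (Var x)) /\
  (forall u nu, jnf u nu -> jnf (Lam u) (Lam nu)) /\
  (forall u v nu nv, jnf u nu -> jnf v nv -> jnf (App u v) (App nu nv)) /\
  (forall u v nu nv, jnf u nu -> jnf v nv -> jnf (ES u v) (subst 0 nv nu)).
Proof.
  split; [|split; [|split; [|split; [|split; [|split]]]]].
  - intros t a b Ha Hb. exists (J t). split.
    + rewrite (J_star _ _ Ha). apply to_J.
    + rewrite (J_star _ _ Hb). apply to_J.
  - apply SN_all.
  - intro t. exists (J t). split.
    + split; [apply to_J | apply pure_normal, J_pure].
    + intros n [H1 H2]. rewrite (J_star _ _ H1). apply J_pure_id, normal_pure, H2.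
  - intro x. split; [apply rt_refl | apply pure_normal; exact I].
  - intros u nu [H1 H2]. split; [apply star_lam; auto|].
    apply pure_normal. simpl. apply normal_pure; auto.
  - intros u v nu nv [H1 H2] [H3 H4]. split.
    + eapply rt_trans; [apply star_appl; eauto | apply star_appr; eauto].
    + apply pure_normal. simpl. split; apply normal_pure; auto.
  - intros u v nu nv [H1 H2] [H3 H4]. split.
    + eapply rt_trans; [apply star_esl; eauto|].
      eapply rt_trans; [apply star_esr; eauto|].
      apply (es_to_subst _ _ _ eq_refl).
    + apply pure_normal, pure_subst; apply normal_pure; auto.
Qed.
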